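(* Let $\mathbb{F}$ be a field of characteristic zero and $n\ge1$. Let $L^n_{\mathbb{F}}$ be the set of all $A\in M_n(\mathbb{F})$ such that the Schur map $S_A\colon M_n(\mathbb{F})\to M_n(\mathbb{F})$, $S_A(B)=A\circ B$, is nonzero and multiplicative, and let $G^n_{\mathbb{F}}=\{A\in M_n(\mathbb{F}) : \text{there is }\lambda\in\mathbb{F}^{*}\text{ with } a_{ij}=\lambda^{j-i}\text{ for all } i,j\}$. Then $L^n_{\mathbb{F}}$, equipped with the Schur product, is an abelian group, and $G^n_{\mathbb{F}}$ is a subgroup of it consisting of Toeplitz matrices.
   Context: $A\circ B=(a_{ij}b_{ij})$ is the entrywise (Schur) product; $\mathbb{F}^*=\mathbb{F}\setminus\{0\}$. A Toeplitz matrix is one with $a_{ij}=a_{i+1,j+1}$ whenever both are defined. *)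

(* Defs.v *)
From mathcomp Require Import all_boot all_order all_algebra.
Set Implicit Arguments. Unset Strict Implicit. Unset Printing Implicit Defensive.
Import GRing.Theory Num.Theory.
Local Open Scope ring_scope.

Definition schur (F : fieldType) (n : nat) (A B : 'M[F]_n) : 'M[F]_n :=
  \matrix_(i, j) (A i j * B i j).

Definition ones (F : fieldType) (n : nat) : 'M[F]_n := \matrix_(i, j) 1.

Definition inL (F : fieldType) (n : nat) (A : 'M[F]_n) : Prop :=
  (exists B : 'M[F]_n, schur A B != 0) /\
  (forall B C : 'M[F]_n, schur A (B *m C) = schur A B *m schur A C).

Definition inG (F : fieldType) (n : nat) (A : 'M[F]_n) : Prop :=
  exists2 l : F, l != 0 &
    forall i j : 'I_n, A i j = l ^ ((nat_of_ord j)%:Z - (nat_of_ord i)%:Z).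

Definition toeplitz (F : fieldType) (n : nat) (A : 'M[F]_n) : Prop :=
  forall i j i' j' : 'I_n, nat_of_ord i' = (i.+1)%N -> nat_of_ord j' = (j.+1)%N ->
    A i j = A i' j'.

(* Main.v *)
Require Import Defs.
From mathcomp Require Import all_boot all_order all_algebra.
Local Open Scope ring_scope.
Import GRing.Theory.
Set Implicit Arguments. Unset Strict Implicit. Unset Printing Implicit Defensive.

Definition cocyc (F : fieldType) (n : nat) (A : 'M[F]_n) : Prop :=
  forall i k j, A i j = A i k * A k j.

Lemma schur_delta (F : fieldType) (n : nat) (A : 'M[F]_n) i k :
  schur A (delta_mx i k) = A i k *: delta_mx i k.
Proof.
apply/matrixP => a b; rewrite !mxE.
by case: (eqVneq a i) => [->|]; case: (eqVneq b k) => [->|] //=; rewrite ?mulr0 ?mulr1.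
Qed.

Lemma inL_cocyc (F : fieldType) (n : nat) (A : 'M[F]_n) : inL A -> cocyc A.
Proof.
move=> [_ HM] i k j.
have := HM (delta_mx i k) (delta_mx k j).
rewrite mul_delta_mx !schur_delta -scalemxAl -scalemxAr scalerA mul_delta_mx.
move/matrixP => /(_ i j); rewrite !mxE !eqxx /= !mulr1.
by [].
Qed.

Lemma cocyc_inL (F : fieldType) (n : nat) (A : 'M[F]_n) :
  (0 < n)%N -> cocyc A -> (forall i, A i i = 1) -> inL A.
Proof.
move=> n0 HP Hd; split.
  exists (ones F n); apply/eqP => /matrixP /(_ (Ordinal n0) (Ordinal n0)).
  by rewrite !mxE Hd mulr1; apply/eqP; exact: oner_neq0.
move=> B C; apply/matrixP => i j; rewrite !mxE mulr_sumr.
apply: eq_bigr => l _; rewrite !mxE (HP i l j).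
by rewrite -!mulrA; congr (_ * _); rewrite mulrCA.
Qed.

Lemma inL_diag (F : fieldType) (n : nat) (A : 'M[F]_n) :
  inL A -> forall i, A i i = 1.
Proof.
move=> HL; have HP := inL_cocyc HL.
case: HL => [[B HB] _].
have [i [j Hij]] : exists i j, A i j != 0.
  case: (boolP [exists i, exists j, A i j != 0]).
    by move=> /existsP [i /existsP [j H]]; exists i, j.
  move=> /negP H; exfalso; move: HB => /eqP; apply; apply/matrixP => a b.
  rewrite !mxE; case: (eqVneq (A a b) 0) => [->|H']; first by rewrite mul0r.
  by exfalso; apply: H; apply/existsP; exists a; apply/existsP; exists b.
have Hii : A i i = 1.
  have := HP i i j; move/(f_equal (fun x => x / A i j)).
  by rewrite mulfK // divff.
move=> k.
have Hki : A k i != 0.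
  apply/eqP => H0; have := HP i k i; rewrite Hii.
  by rewrite mulrC H0 mul0r; apply/eqP; exact: oner_neq0.
have := HP k i k; move/(f_equal (fun x => x * A k i)).
rewrite -mulrA -(HP i k i) Hii mulr1 => H.
by apply: (mulIf Hki); rewrite mul1r.
Qed.

Lemma inL_nz (F : fieldType) (n : nat) (A : 'M[F]_n) :
  inL A -> forall i j, A i j != 0.
Proof.
move=> HL i j; apply/eqP => H0.
have := inL_cocyc HL i j i; rewrite inL_diag // H0 mul0r.
by apply/eqP; exact: oner_neq0.
Qed.

Theorem proposition3p2 (F : fieldType) (n : nat) :
  [pchar F] =i pred0 -> (0 < n)%N ->
  (* L^n_F with the Schur product is an abelian group *)
  ((forall A B : 'M[F]_n, inL A -> inL B -> inL (schur A B)) /\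
   (forall A B C : 'M[F]_n, schur A (schur B C) = schur (schur A B) C) /\
   (forall A B : 'M[F]_n, schur A B = schur B A) /\
   inL (ones F n) /\
   (forall A : 'M[F]_n, inL A -> schur (ones F n) A = A) /\
   (forall A : 'M[F]_n, inL A ->
      exists2 B : 'M[F]_n, inL B & schur A B = ones F n)) /\
  (* G^n_F is a subgroup of L^n_F consisting of Toeplitz matrices *)
  ((forall A : 'M[F]_n, inG A -> inL A) /\
   inG (ones F n) /\
   (forall A B : 'M[F]_n, inG A -> inG B -> inG (schur A B)) /\
   (forall A : 'M[F]_n, inG A ->
      exists2 B : 'M[F]_n, inG B & schur A B = ones F n) /\
   (forall A : 'M[F]_n, inG A -> toeplitz A)).
Proof.
move=> _ n0; split; [split; [|split; [|split; [|split; [|split]]]] |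
                     split; [|split; [|split; [|split]]]].
- move=> A B HA HB; apply: cocyc_inL => //.
    move=> i k j; rewrite !mxE (inL_cocyc HA i k j) (inL_cocyc HB i k j).
    by rewrite -!mulrA; congr (_ * _); rewrite mulrCA.
  by move=> i; rewrite mxE !inL_diag // mulr1.
- by move=> A B C; apply/matrixP => i j; rewrite !mxE mulrA.
- by move=> A B; apply/matrixP => i j; rewrite !mxE mulrC.
- apply: cocyc_inL => //; first by move=> i k j; rewrite !mxE mulr1.
  by move=> i; rewrite mxE.
- by move=> A _; apply/matrixP => i j; rewrite !mxE mul1r.
- move=> A HA; exists (\matrix_(i, j) (A i j)^-1).
    apply: cocyc_inL => //.
      by move=> i k j; rewrite !mxE (inL_cocyc HA i k j) invfM.
    by move=> i; rewrite mxE inL_diag // invr1.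
  by apply/matrixP => i j; rewrite !mxE divff // inL_nz.
- move=> A [l l0 HA]; apply: cocyc_inL => //.
    move=> i k j; rewrite !HA -expfzDr //; congr (_ ^ _).
    by rewrite [RHS]addrC addrA subrK.
  by move=> i; rewrite HA subrr expr0z.
- by exists 1; [exact: oner_neq0 | move=> i j; rewrite mxE exp1rz].
- move=> A B [l l0 HA] [m m0 HB]; exists (l * m).
    by rewrite mulf_neq0.
  by move=> i j; rewrite mxE HA HB expfzMl.
- move=> A [l l0 HA]; exists (\matrix_(i, j) (l^-1) ^ ((nat_of_ord j)%:Z - (nat_of_ord i)%:Z)).
    exists l^-1; first by rewrite invr_neq0.
    by move=> i j; rewrite mxE.
  by apply/matrixP => i j; rewrite !mxE HA -expfzMl divff // exp1rz.
- move=> A [l l0 HA] i j i' j' Hi Hj; rewrite !HA Hi Hj; congr (_ ^ _).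
  by rewrite !intS opprD addrACA subrr add0r.
Qed.
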